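(* Let $X$ be a real reflexive Banach space and let $\{F_t\}_{t \in T}$ be a non-empty family of convex existence sets in $X$ directed by inclusion, i.e. for any $t_1, t_2 \in T$ there is $t_3 \in T$ with $F_{t_1} \cup F_{t_2} \subset F_{t_3}$. Then $F = \mathrm{cl}\left(\bigcup_{t \in T} F_t\right)$ is an existence set.
   Context: For a non-empty set $F \subset X$ and $x \in X$, let $R_F(x) = \{ d \in F : \|d-c\| \le \|x-c\| \text{ for all } c \in F\}$. A non-empty set $F \subset X$ is an existence set if $R_F(x) \neq \emptyset$ for every $x \in X$. $\mathrm{cl}$ denotes norm closure. *)

(* Defs.v *)
From HB Require Import structures.
From mathcomp Require Import all_boot all_order all_algebra.
From mathcomp Require Import all_classical all_reals all_analysis.
Import Order.TTheory GRing.Theory Num.Theory.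
Import numFieldNormedType.Exports.
Local Open Scope classical_set_scope.
Local Open Scope ring_scope.

Section Defs.
Context {R : realType} {X : normedModType R}.

Definition cont_lin_functional (f : X -> R) : Prop :=
  (forall (a : R) (x y : X), f (a *: x + y) = a * f x + f y) /\ continuous f.

Definition dual_linear (phi : (X -> R) -> R) : Prop :=
  forall (a : R) (f g : X -> R), cont_lin_functional f -> cont_lin_functional g ->
    phi (fun x => a * f x + g x) = a * phi f + phi g.

(* phi is bounded w.r.t. the dual norm: |phi f| <= M ||f||_* , where
   ||f||_* <= C  iff  |f x| <= C ||x|| for all x *)
Definition dual_bounded (phi : (X -> R) -> R) : Prop :=
  exists M : R, forall f : X -> R, cont_lin_functional f ->
    forall C : R, 0 <= C -> (forall x : X, `|f x| <= C * `|x|) ->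
      `|phi f| <= M * C.

Definition reflexive_space : Prop :=
  forall phi : (X -> R) -> R, dual_linear phi -> dual_bounded phi ->
    exists x : X, forall f : X -> R, cont_lin_functional f -> phi f = f x.

Definition RF (F : set X) (x : X) : set X :=
  [set d | F d /\ forall c, F c -> `|d - c| <= `|x - c|].

Definition existence_set (F : set X) : Prop :=
  F !=set0 /\ forall x : X, RF F x !=set0.

End Defs.

(* Main.v *)
Require Import Defs.
From HB Require Import structures.
From mathcomp Require Import all_boot all_order all_algebra.
From mathcomp Require Import all_classical all_reals all_analysis.
From mathcomp Require Import ring lra.
Import Order.TTheory GRing.Theory Num.Theory.
Import numFieldNormedType.Exports.
Local Open Scope classical_set_scope.
Local Open Scope ring_scope.

Section HahnBanach.
Variables (R : realType) (V : lmodType R) (p : V -> R).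
Hypothesis p0 : p 0 = 0.
Hypothesis pD : forall x y, p (x + y) <= p x + p y.
Hypothesis pZ : forall a x, 0 < a -> p (a *: x) <= a * p x.

Lemma pZge a x : 0 < a -> a * p x <= p (a *: x).
Proof.
move=> a0; have ia0 : 0 < a^-1 by rewrite invr_gt0.
have := @pZ a^-1 (a *: x) ia0.
rewrite scalerA mulVf ?gt_eqF // scale1r => h.
by rewrite -(ler_pM2l ia0) mulrA mulVf ?gt_eqF // mul1r.
Qed.

Lemma subrBB (z a b : V) : (z - a) - (z - b) = b - a.
Proof. by rewrite opprB addrC addrA subrK. Qed.

Lemma combE (a l1 l2 : R) (x y w : V) :
  a *: x + y - (a * l1 + l2) *: w = a *: (x - l1 *: w) + (y - l2 *: w).
Proof. by rewrite scalerBr scalerA scalerDl opprD addrACA. Qed.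

Definition subsp (D : set V) := D 0 /\ forall a x y, D x -> D y -> D (a *: x + y).
Definition linon (D : set V) (g : V -> R) :=
  forall a x y, D x -> D y -> g (a *: x + y) = a * g x + g y.
Definition domin (D : set V) (g : V -> R) := forall x, D x -> g x <= p x.

Lemma subspZ {D} a {x} : subsp D -> D x -> D (a *: x).
Proof. by move=> [D0 DD] Dx; rewrite -[_ *: _]addr0; apply: DD. Qed.
Lemma subspD {D x y} : subsp D -> D x -> D y -> D (x + y).
Proof. by move=> [D0 DD] Dx Dy; rewrite -[x]scale1r; apply: DD. Qed.
Lemma subspB {D x y} : subsp D -> D x -> D y -> D (x - y).
Proof.
move=> sD Dx Dy; rewrite -scaleN1r; apply: subspD => //; exact: subspZ.
Qed.
Lemma linon0 {D g} : subsp D -> linon D g -> g 0 = 0.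
Proof.
move=> [D0 _] lg; have := lg 1 0 0 D0 D0; rewrite scale1r addr0 mul1r => h.
by apply/eqP; rewrite -(subrr (g 0)) {2}h addrK.
Qed.
Lemma linonZ {D g} a {x} : subsp D -> linon D g -> D x -> g (a *: x) = a * g x.
Proof.
move=> sD lg Dx; have := lg a x 0 Dx sD.1; rewrite addr0 => ->.
by rewrite (linon0 sD lg) addr0.
Qed.

Lemma ext_step D g w c : subsp D -> linon D g -> domin D g -> ~ D w ->
  (forall y, D y -> g y - p (y - w) <= c) ->
  (forall x, D x -> c <= p (x + w) - g x) ->
  exists g' : V -> R, let D' := [set z | exists l, D (z - l *: w)] in
    [/\ subsp D', linon D' g', domin D' g', (forall x, D x -> g' x = g x)
      & g' w = c].
Proof.
move=> sD lg dg Dw cl cu.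
have uniq l m z : D (z - l *: w) -> D (z - m *: w) -> l = m.
  move=> h1 h2; apply/eqP; apply: contraT => /eqP lm; exfalso; apply: Dw.
  have : D ((l - m) *: w) by rewrite (_ : _ *: _ = (z - m *: w) - (z - l *: w));
    [apply: subspB | rewrite subrBB scalerBl].
  move=> hh; have := subspZ (l - m)^-1 sD hh; rewrite scalerA mulVf ?scale1r //.
  by rewrite subr_eq0; apply/eqP.
pose lam z := xget 0 [set l | D (z - l *: w)].
have lamE z l : D (z - l *: w) -> lam z = l.
  move=> h; have hx : D (z - lam z *: w).
    exact: (@xgetPex _ 0 [set l | D (z - l *: w)] (ex_intro _ l h)).
  exact: uniq hx h.
pose g' z := g (z - lam z *: w) + lam z * c.
have g'E z l : D (z - l *: w) -> g' z = g (z - l *: w) + l * c.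
  by move=> h; rewrite /g' (lamE _ _ h).
exists g'; split.
- split; first by exists 0; rewrite scale0r subr0; exact: sD.1.
  move=> a x y [l1 h1] [l2 h2]; exists (a * l1 + l2).
  rewrite combE; exact: sD.2.
- move=> a x y [l1 h1] [l2 h2].
  have h3 : D (a *: x + y - (a * l1 + l2) *: w).
    rewrite combE; exact: sD.2.
  rewrite (g'E _ _ h3) (g'E _ _ h1) (g'E _ _ h2).
  rewrite combE.
  by rewrite lg //; ring.
- move=> z [l h]; rewrite (g'E _ _ h).
  have [x {}h ->] : exists2 x, D x & z = x + l *: w.
    by exists (z - l *: w) => //; rewrite subrK.
  rewrite addrK.
  have [l0|l0|->] := ltgtP l 0.
  + pose m := - l; have m0 : 0 < m by rewrite oppr_gt0.
    have Dx' : D (m^-1 *: x) by apply: subspZ.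
    have := cl _ Dx'; rewrite (linonZ _ sD lg h) => h1.
    have h2 : g x - m * p (m^-1 *: x - w) <= m * c.
      by move: h1; rewrite -(ler_pM2l m0) mulrBr mulrA mulfV ?gt_eqF // mul1r.
    have h4 := @pZge m (m^-1 *: x - w) m0.
    rewrite scalerBr scalerA mulfV ?gt_eqF // scale1r in h4.
    have -> : x + l *: w = x - m *: w by rewrite /m scaleNr opprK.
    have -> : l * c = - (m * c) by rewrite /m mulNr opprK.
    lra.
  + have Dx' : D (l^-1 *: x) by apply: subspZ.
    have := cu _ Dx'; rewrite (linonZ _ sD lg h) => h1.
    have h2 : l * c <= l * p (l^-1 *: x + w) - g x.
      by move: h1; rewrite -(ler_pM2l l0) mulrBr mulrA mulfV ?gt_eqF // mul1r.
    have h4 := @pZge l (l^-1 *: x + w) l0.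
    rewrite scalerDr scalerA mulfV ?gt_eqF // scale1r in h4.
    lra.
  + by rewrite scale0r addr0 mul0r addr0; exact: dg.
- by move=> x Dx; rewrite (g'E x 0) ?scale0r ?subr0 ?mul0r ?addr0.
- rewrite (g'E w 1) ?scale1r ?subrr ?mul1r ?(linon0 sD lg) ?add0r //; exact: sD.1.
Qed.


Definition goodHB v0 (Dg : set V * (V -> R)) :=
  [/\ subsp Dg.1, linon Dg.1 Dg.2, domin Dg.1 Dg.2, Dg.1 v0 & Dg.2 v0 = p v0].

Lemma good_init v0 : exists Dg, goodHB v0 Dg.
Proof.
have s0 : subsp [set 0] by split => // a x y -> ->; rewrite scaler0 addr0.
have l0 : linon [set 0] (fun _ => 0) by move=> *; rewrite mulr0 addr0.
have d0 : domin [set 0] (fun _ => 0) by move=> x ->; rewrite p0.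
case: (pselect (v0 = 0)) => [->|nv0].
  by exists ([set 0], fun _ => 0); split => //=; rewrite p0.
have [|||g' [sD' lD' dD' _ gw]] := @ext_step [set 0] (fun _ => 0) v0 (p v0) s0 l0 d0.
- by [].
- move=> y ->; have := pD v0 (- v0); rewrite subrr p0 add0r => h.
  rewrite sub0r; lra.
- by move=> x ->; rewrite add0r subr0.
exists ([set z | exists l, [set 0] (z - l *: v0)], g'); split => //=.
by exists 1; rewrite scale1r subrr.
Qed.

Lemma hahn_banach v0 : exists f : V -> R,
  [/\ forall a x y, f (a *: x + y) = a * f x + f y,
      forall x, f x <= p x & f v0 = p v0].
Proof.
pose Tz := {Dg | goodHB v0 Dg}.
pose le (a b : Tz) := `[< (sval a).1 `<=` (sval b).1 /\
   forall x, (sval a).1 x -> (sval b).2 x = (sval a).2 x >].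
have [Dg0 good0] := good_init v0.
have [m mmax] : exists m, premaximal le m.
  apply: (@ZL_preorder _ (exist _ Dg0 good0)).
  - by move=> t; apply/asboolP; split.
  - move=> r s t /asboolP [rs1 rs2] /asboolP [st1 st2]; apply/asboolP; split.
      exact: subset_trans st1.
    by move=> x rx; rewrite st2 ?rs2 //; exact: rs1.
  - move=> A tot.
    have [[a0 Aa0]|A0] := pselect (A !=set0); last first.
      by exists (exist _ Dg0 good0) => s As; exfalso; apply: A0; exists s.
    pose Dst := [set x | exists a, A a /\ (sval a).1 x].
    pose gst x := match pselect (exists a, A a /\ (sval a).1 x) with
      | left H => (sval (projT1 (cid H))).2 x | right _ => 0 end.
    have key a x : A a -> (sval a).1 x -> gst x = (sval a).2 x.
      move=> Aa ax; rewrite /gst; case: pselect => [H|nH]; last first.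
        by exfalso; apply: nH; exists a.
      case: (cid H) => b [Ab bx] /=.
      have [/asboolP [ab1 ab2]|/asboolP [ba1 ba2]] := tot _ _ Aa Ab.
        exact: ab2.
      by rewrite ba2.
    have both x y : Dst x -> Dst y -> exists b, [/\ A b, (sval b).1 x & (sval b).1 y].
      move=> [a [Aa ax]] [b [Ab bx]].
      have [/asboolP [ab1 ab2]|/asboolP [ba1 ba2]] := tot _ _ Aa Ab.
        by exists b; split => //; exact: ab1.
      by exists a; split => //; exact: ba1.
    have gd : goodHB v0 (Dst, gst).
      have [s0 l0 d0 v00 pv0] := svalP a0.
      split => /=.
      - split; first by exists a0; split => //; exact: s0.1.
        move=> a x y Dx Dy; have [b [Ab bx bY]] := both _ _ Dx Dy.
        have [sb _ _ _ _] := svalP b.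
        by exists b; split => //; exact: sb.2.
      - move=> a x y Dx Dy; have [b [Ab bx bY]] := both _ _ Dx Dy.
        have [sb lb _ _ _] := svalP b.
        by rewrite !(key b) //; [exact: lb | exact: sb.2].
      - move=> x [b [Ab bx]]; have [_ _ db _ _] := svalP b.
        by rewrite (key b) //; exact: db.
      - by exists a0.
      - by rewrite (key a0).
    exists (exist _ (Dst, gst) gd) => s As; apply/asboolP; split => /=.
      by move=> x sx; exists s.
    by move=> x sx; rewrite (key s).
case: m mmax => [[D g] [sD lD dD Dv0 gv0]] mmax.
have Dall : forall w, D w.
  move=> w; apply: contrapT => Dw.
  pose S := [set g y - p (y - w) | y in D].
  have S0 : S !=set0 by exists (g 0 - p (0 - w)), 0 => //; exact: sD.1.
  have ubS x : D x -> ubound S (p (x + w) - g x).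
    move=> Dx _ [y Dy <-].
    have := lD 1 x y Dx Dy; rewrite scale1r mul1r => gxy.
    have := dD _ (subspD sD Dx Dy) => pxy.
    have := pD (x + w) (y - w); rewrite addrACA subrr addr0 => h.
    rewrite /= in gxy pxy; lra.
  have hsS : has_sup S by split => //; exists (p (0 + w) - g 0); apply: ubS; exact: sD.1.
  have [||g' [sD' lD' dD' eD' gw]] := @ext_step D g w (sup S) sD lD dD Dw.
  - by move=> y Dy; apply: sup_upper_bound => //; exists y.
  - by move=> x Dx; apply: ge_sup => //; exact: ubS.
  set D' := [set z | exists l, D (z - l *: w)] in sD' lD' dD'.
  have gd' : goodHB v0 (D', g').
    split => //=; first by exists 0; rewrite scale0r subr0.
    by rewrite eD'.
  have := mmax (exist _ (D', g') gd').
  have le1 : le (exist (goodHB v0) (D, g) (And5 sD lD dD Dv0 gv0)) (exist _ (D', g') gd').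
    apply/asboolP; split => /=.
      by move=> x Dx; exists 0; rewrite scale0r subr0.
    exact: eD'.
  move=> /(_ le1) /asboolP [/= D'D _]; apply: Dw; apply: D'D.
  by exists 1; rewrite scale1r subrr; exact: sD.1.
exists g; split => //.
- by move=> a x y; exact: (lD a x y (Dall x) (Dall y)).
- by move=> x; exact: (dD x (Dall x)).
Qed.

End HahnBanach.


Section Analytic.
Variables (R : realType) (X : normedModType R).

Definition linf (f : X -> R) := forall a x y, f (a *: x + y) = a * f x + f y.

Lemma linf0 {f} : linf f -> f 0 = 0.
Proof.
move=> lf; have := lf 1 0 0; rewrite scale1r addr0 mul1r => h.
by apply/eqP; rewrite -(subrr (f 0)) {2}h addrK.
Qed.

Lemma linfB {f} x y : linf f -> f (x - y) = f x - f y.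
Proof.
move=> lf; have := lf 1 (x - y) y; rewrite scale1r subrK mul1r => ->.
by rewrite addrK.
Qed.

Lemma linfZ {f} a x : linf f -> f (a *: x) = a * f x.
Proof. by move=> lf; have := lf a x 0; rewrite addr0 (linf0 lf) addr0. Qed.

Lemma bounded_cont (f : X -> R) (C : R) : linf f ->
  (forall x, `|f x| <= C * `|x|) -> @cont_lin_functional R X f.
Proof.
move=> lf bf; split => // x; apply/cvgrPdist_lt => e e0.
have C1 : 0 < `|C| + 1 by rewrite ltr_wpDl.
apply/nbhs_ballP; exists (e / (`|C| + 1)) => /=; first by rewrite divr_gt0.
move=> y; rewrite -ball_normE /= => hy.
rewrite -linfB //; apply: (le_lt_trans (bf _)).
have : `|x - y| * (`|C| + 1) < e by rewrite -ltr_pdivlMr.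
have : C * `|x - y| <= `|C| * `|x - y| by rewrite ler_wpM2r // real_ler_norm ?num_real.
have := normr_ge0 (x - y).
nra.
Qed.

Lemma cont_bounded (f : X -> R) : @cont_lin_functional R X f ->
  exists C, 0 <= C /\ forall x, `|f x| <= C * `|x|.
Proof.
move=> [lf cf]; have := cf 0 => /cvgrPdist_lt /(_ 1 ltr01).
move=> /nbhs_ballP [d /= d0 hd].
exists (2 / d); split; first by rewrite divr_ge0 // ltW.
move=> y; have [->|y0] := eqVneq y 0; first by rewrite (linf0 lf) !normr0 mulr0.
have ny : 0 < `|y| by rewrite normr_gt0.
pose k := d / (2 * `|y|); have k0 : 0 < k by rewrite divr_gt0 // mulr_gt0.
have := hd (k *: y); rewrite -ball_normE /= sub0r normrN normrZ gtr0_norm //.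
rewrite (linf0 lf) sub0r normrN (linfZ _ _ lf) normrM gtr0_norm //.
have -> : k * `|y| = d / 2 by rewrite /k; field; rewrite gt_eqF.
move=> /(_ _) h; have {h} h := h ltac:(lra).
rewrite -(ler_pM2l k0) (_ : k * (2 / d * `|y|) = 1); first exact: ltW.
by rewrite /k; field; rewrite !gt_eqF.
Qed.

End Analytic.

Arguments linf {R X} f.
Arguments linf0 {R X f}.
Arguments linfB {R X f} x y.
Arguments linfZ {R X f} a x.
Arguments bounded_cont {R X f C}.
Arguments cont_bounded {R X f}.

Lemma ultra_lim (R : realType) (T : Type) (G : set_system T) (GU : UltraFilter G)
  (u : T -> R) (M : R) :
  G [set t | `|u t| <= M] -> exists l : R, (u @ G --> l)%classic.
Proof.
move=> hM.
have K : (u @ G)%classic [set` `[- M, M]].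
  apply: (@filterS _ _ _ [set t | `|u t| <= M]) hM => t /= ht.
  by rewrite in_itv /= -ler_norml.
have [p [_ cp]] := segment_compact _ K.
exists p => B /= Bp.
have [//|GnB] := in_ultra_setVsetC (u @^-1` B) GU.
have [y [/= nBy By]] := cp (~` B) B GnB Bp.
by exfalso.
Qed.

Lemma lim_le (R : realType) (T : Type) (G : set_system T) (GU : ProperFilter G)
  (u : T -> R) (l M : R) :
  (u @ G --> l)%classic -> G [set t | u t <= M] -> l <= M.
Proof. move=> ul hM; exact: (@closed_cvg T R G _ u [set x | x <= M] (@closed_le R M) hM l ul). Qed.

Lemma lim_ge (R : realType) (T : Type) (G : set_system T) (GU : ProperFilter G)
  (u : T -> R) (l M : R) :
  (u @ G --> l)%classic -> G [set t | M <= u t] -> M <= l.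
Proof. move=> ul hM; exact: (@closed_cvg T R G _ u [set x | M <= x] (@closed_ge R M) hM l ul). Qed.

Arguments ultra_lim {R T G} GU {u M}.
Arguments lim_le {R T G GU u l M}.
Arguments lim_ge {R T G GU u l M}.

Section Sep.
Variables (R : realType) (X : normedModType R).

Lemma sym_bound (f : X -> R) (C : R) : linf f -> (forall x, f x <= C * `|x|) ->
  forall x, `|f x| <= C * `|x|.
Proof.
move=> lf hf x; rewrite ler_norml hf andbT.
have := hf (- x); rewrite normrN -scaleN1r (linfZ _ _ lf); lra.
Qed.

Lemma norming (v : X) : exists f : X -> R,
  [/\ linf f, forall x, `|f x| <= `|x| & f v = `|v|].
Proof.
have p0 : `|0 : X| = 0 by rewrite normr0.
have pD : forall x y : X, `|x + y| <= `|x| + `|y| by move=> x y; exact: ler_normD.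
have pZ : forall (a : R) (x : X), 0 < a -> `|a *: x| <= a * `|x|.
  by move=> a x a0; rewrite normrZ gtr0_norm.
have [f [lf fp fv]] := @hahn_banach R X (fun x => `|x|) p0 pD pZ v.
exists f; split => // x; rewrite -[`|x|]mul1r; apply: sym_bound => // y.
by rewrite mul1r.
Qed.


Lemma separation (U : set X) (u0 d : X) (r : R) :
  U u0 ->
  (forall u1 u2 a, U u1 -> U u2 -> 0 <= a -> a <= 1 -> U (a *: u1 + (1 - a) *: u2)) ->
  0 < r -> (forall u, U u -> r <= `|d - u|) ->
  exists f : X -> R, [/\ linf f, (exists C, forall x, `|f x| <= C * `|x|) &
    exists2 eps, 0 < eps & forall u, U u -> f u <= f d - eps].
Proof.
move=> Uu0 Uc r0 far.
pose r' := r / 2; have r'0 : 0 < r' by rewrite divr_gt0.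
have rr : r = r' * 2 by rewrite /r' divfK ?pnatr_eq0.
pose S (y : X) := [set l : R | 0 <= l /\ exists k, U (u0 + k) /\ `|y - l *: k| <= l * r'].
pose q y := inf (S y).
have Slb y : has_lbound (S y) by exists 0 => l [].
have Sne y : S y (`|y| / r').
  split; first by rewrite divr_ge0 // ltW.
  by exists 0; split; rewrite ?addr0 // scaler0 subr0 divfK ?gt_eqF.
have qle y l : S y l -> q y <= l by move=> Sl; exact: (ge_inf (Slb y) Sl).
have qge y m : (forall l, S y l -> m <= l) -> m <= q y.
  by move=> h; apply: lb_le_inf => //; exists (`|y| / r'); exact: Sne.
have q0 : q 0 = 0.
  apply/eqP; rewrite eq_le; apply/andP; split.
    apply: (qle _ _); split => //; exists 0.
    by rewrite addr0 scaler0 subr0 normr0 mul0r.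
  by apply: (qge _ _) => l [].
have qZ a y : 0 < a -> q (a *: y) <= a * q y.
  move=> a0.
  suff h : q (a *: y) / a <= q y.
    by move: h; rewrite ler_pdivrMr // mulrC.
  apply: (qge _ _) => l [l0 [k [Uk hk]]].
  rewrite ler_pdivrMr // mulrC; apply: (qle _ _); split; first by rewrite mulr_ge0 // ltW.
  exists k; split => //; rewrite -scalerA -scalerBr normrZ gtr0_norm // -mulrA.
  by rewrite ler_pM2l.
have qD y1 y2 : q (y1 + y2) <= q y1 + q y2.
  suff h : forall l1 l2, S y1 l1 -> S y2 l2 -> q (y1 + y2) <= l1 + l2.
    have h1 : q (y1 + y2) - q y2 <= q y1.
      apply: (qge _ _) => l1 S1.
      have : q (y1 + y2) - l1 <= q y2.
        by apply: (qge _ _) => l2 S2; have := h _ _ S1 S2; lra.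
      lra.
    lra.
  move=> l1 l2 [l10 [k1 [U1 h1]]] [l20 [k2 [U2 h2]]].
  apply: (qle _ _); split; first by rewrite addr_ge0.
  have [k [Uk ek]] : exists k, U (u0 + k) /\ (l1 + l2) *: k = l1 *: k1 + l2 *: k2.
    have : 0 <= l1 + l2 by rewrite addr_ge0.
    rewrite le_eqVlt => /orP [/eqP l0|lpos].
      have e1 : l1 = 0 by lra.
      have e2 : l2 = 0 by lra.
      exists 0; split; first by rewrite addr0.
      by rewrite e1 e2 !scale0r scaler0 addr0.
    pose a := l1 / (l1 + l2).
    have a0 : 0 <= a by rewrite /a divr_ge0 // ltW.
    have a1 : a <= 1 by rewrite /a ler_pdivrMr // mul1r lerDl.
    exists (a *: k1 + (1 - a) *: k2); split.
      have -> : u0 + (a *: k1 + (1 - a) *: k2) = a *: (u0 + k1) + (1 - a) *: (u0 + k2).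
        by rewrite !scalerDr addrACA -scalerDl [a + _]addrC subrK scale1r.
      exact: Uc.
    rewrite scalerDr !scalerA; congr (_ *: _ + _ *: _); rewrite /a; field;
      by rewrite gt_eqF.
  exists k; split => //; rewrite ek (_ : y1 + y2 - _ = (y1 - l1 *: k1) + (y2 - l2 *: k2)); last first.
    by rewrite opprD addrACA.
  apply: le_trans (ler_normD _ _) _; rewrite mulrDl; exact: lerD.
have qv : 1 <= q (d - u0).
  apply: (qge _ _) => l [l0 [k [Uk hk]]]; rewrite leNgt; apply/negP => l1.
  have Uu : U (u0 + l *: k).
    have -> : u0 + l *: k = l *: (u0 + k) + (1 - l) *: u0.
      by rewrite scalerDr scalerBl scale1r [RHS]addrC addrA subrK.
    by apply: (Uc _ _ _) => //; exact: ltW.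
  have := far _ Uu; rewrite (_ : d - (u0 + l *: k) = d - u0 - l *: k); last first.
    by rewrite opprD addrA.
  move=> h; nra.
have qU u z : U u -> `|z| <= r' -> q (u - u0 + z) <= 1.
  move=> Uu hz; apply: (qle _ _); split => //; exists (u - u0); split.
    by rewrite addrC subrK.
  by rewrite scale1r addrAC subrr add0r mul1r.
have [f [lf fq fv]] := @hahn_banach R X q q0 qD qZ (d - u0).
exists f; split => //.
  exists r'^-1; apply: sym_bound => // x; rewrite mulrC.
  exact: le_trans (fq x) (qle _ _ (Sne x)).
have v0 : d - u0 != 0.
  apply/eqP => h; move: fv; rewrite h q0 (linf0 lf) => h0.
  by move: qv; rewrite h q0; lra.
have nv : 0 < `|d - u0| by rewrite normr_gt0.
pose eps := r' / `|d - u0|; have eps0 : 0 < eps by rewrite divr_gt0.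
exists eps => // u Uu.
have hz : `|eps *: (d - u0)| <= r'.
  by rewrite normrZ gtr0_norm // divfK ?gt_eqF.
have h1 := qU u _ Uu hz.
have h2 := fq (u - u0 + eps *: (d - u0)).
have h3 := lf 1 (u - u0) (eps *: (d - u0)).
rewrite scale1r mul1r (linfB _ _ lf) (linfZ _ _ lf) (linfB _ _ lf) in h3.
rewrite h3 in h2.
rewrite (linfB _ _ lf) in fv.
have h4 : eps * 1 <= eps * (f d - f u0) by rewrite ler_pM2l // fv.
nra.
Qed.

End Sep.


Theorem lemma13 (R : realType) (X : completeNormedModType R)
  (T : Type) (F_ : T -> set X) :
  @reflexive_space R X ->
  inhabited T ->
  (forall t, convex_set (F_ t : set (convex_lmodType X))) ->
  (forall t, existence_set (F_ t)) ->
  (forall t1 t2, exists t3, F_ t1 `|` F_ t2 `<=` F_ t3) ->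
  existence_set (closure (\bigcup_(t in [set: T]) F_ t)).
Proof.
move=> refl [t0] cvx ex dir.
set U := \bigcup_(t in [set: T]) F_ t.
have Uc u1 u2 (a : R) : U u1 -> U u2 -> 0 <= a -> a <= 1 ->
    U (a *: u1 + (1 - a) *: u2).
  move=> [s1 _ h1] [s2 _ h2] a0 a1; have [s3 h3] := dir s1 s2.
  exists s3 => //.
  have := cvx s3 u1 u2 (Itv01 a0 a1) (mem_set (h3 _ (or_introl h1)))
    (mem_set (h3 _ (or_intror h2))).
  by move/set_mem.
have [[c0 c0F] _] := ex t0.
have Uc0 : U c0 by exists t0.
split; first by exists c0; apply: subset_closure.
move=> x.
have [dt hdt] : {dt : T -> X & forall t, RF (F_ t) x (dt t)}.
  exact: (choice (fun t => (ex t).2 x)).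
pose Fd := filter_from [set: T] (fun s => [set t | F_ s `<=` F_ t]).
have FdF : ProperFilter Fd.
  apply: filter_from_proper; last by move=> s _; exists s.
  apply: filter_from_filter; first by exists t0.
  move=> i j _ _; have [k hk] := dir i j; exists k => // t /= kt; split.
    by move=> y iy; apply: kt; apply: hk; left.
  by move=> y jy; apply: kt; apply: hk; right.
have [G [GU FG]] := ultraFilterLemma FdF.
have GP : ProperFilter G by exact: ultra_proper.
have Gs s : G [set t | F_ s `<=` F_ t] by apply: FG; exists s.
pose B := `|x - c0| + `|c0|.
have dtB : G [set t | `|dt t| <= B].
  apply: (filterS _ (Gs t0)) => t /= st.
  have := (hdt t).2 c0 (st _ c0F).
  have := ler_normD (dt t - c0) c0; rewrite subrK /B; lra.

pose phi (h : X -> R) : R := lim ((h \o dt) @ G)%classic.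
have cvphi h : cont_lin_functional h -> ((h \o dt) @ G --> phi h)%classic.
  move=> ch; have [C [C0 hC]] := cont_bounded ch.
  have hG : G [set t | `|(h \o dt) t| <= C * B].
    apply: (filterS _ dtB) => t /= ht.
    by apply: le_trans (hC _) _; rewrite ler_wpM2l.
  have [l hl] := ultra_lim GU hG.
  by rewrite /phi (cvg_lim _ hl).
have lin : dual_linear phi.
  move=> a f g cf cg.
  have hh := cvgD (cvgM (cvg_cst a) (cvphi f cf)) (cvphi g cg).
  rewrite /phi (_ : (fun x => a * f x + g x) \o dt = (fun=> a) \* (f \o dt) + (g \o dt)).
    have GF : Filter G by apply: GP.
    by rewrite (cvg_lim _ (hh GF GF GF)).
  by apply: funext.
have bnd : dual_bounded phi.
  exists B => f cf C C0 hC.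
  have hl := cvphi f cf.
  have hG : G [set t | `|f (dt t)| <= B * C].
    apply: (filterS _ dtB) => t /= ht.
    by apply: le_trans (hC _) _; rewrite [B * C]mulrC ler_wpM2l.
  rewrite ler_norml; apply/andP; split.
    apply: (lim_ge hl); apply: (filterS _ hG) => t /=; rewrite ler_norml.
    by move/andP => [].
  apply: (lim_le hl); apply: (filterS _ hG) => t /=; rewrite ler_norml.
  by move/andP => [].
have [d hd] := refl phi lin bnd.
have onU c : U c -> `|d - c| <= `|x - c|.
  move=> [s _ cs]; have [n [ln nb nv]] := @norming _ _ (d - c).
  have cn : cont_lin_functional n.
    by apply: (bounded_cont (C := 1) ln) => y; rewrite mul1r.
  have hdn := hd n cn; have hl := cvphi n cn.
  have : phi n <= `|x - c| + n c.
    apply: (lim_le hl); apply: (filterS _ (Gs s)) => t st /=.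
    have := (hdt t).2 c (st _ cs).
    have := nb (dt t - c); rewrite (linfB _ _ ln).
    have := ler_norm (n (dt t) - n c); lra.
  by rewrite -nv (linfB _ _ ln); lra.
exists d; split; last first.
  move=> c cc; apply/ler_addgt0Pr => e e0.
  have e20 : 0 < e / 2 by rewrite divr_gt0.
  have [u [Uu bu]] := cc _ (nbhsx_ballx c (e / 2) e20).
  move: bu; rewrite -ball_normE /= => bu.
  have := onU u Uu.
  have := ler_distD u d c; have := ler_distD c x u.
  rewrite (distrC u c); lra.
apply: contrapT => nd.
have [r [r0 far]] : exists r, 0 < r /\ forall u, U u -> r <= `|d - u|.
  apply: contrapT => nex; apply: nd => A /nbhs_ballP [r r0 hA].
  apply: contrapT => nUA; apply: nex; exists r; split => // u Uu.
  rewrite leNgt; apply/negP => hu; apply: nUA; exists u; split => //.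
  by apply: hA; rewrite -ball_normE /=.
have [f [lf [C hC] [eps eps0 hf]]] := @separation _ _ U c0 d r Uc0 Uc r0 far.
have cf := bounded_cont lf hC.
have hdf := hd f cf; have hl := cvphi f cf.
have : phi f <= f d - eps.
  apply: (lim_le hl); apply: filterE => t; apply: hf.
  by exists t => //; exact: (hdt t).1.
lra.
Qed.
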